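(* Let $A$ and $B$ be self-adjoint operators on the same complex Hilbert space, with $B$ bounded and non-negative. Then the following are equivalent: (i) $0 \in \rho(A+tB)$ for every $t\in\mathbb{R}$; (ii) $0\in\rho(A)$ and $BA^{-1}B=0$. Moreover, in this case $0\in\rho(A+zB)$ for all $z \in \mathbb{C}$, and $$(A+zB)^{-1} = A^{-1} - zA^{-1}BA^{-1}.$$
   Context: $\rho(T)$ denotes the resolvent set of an operator $T$. $A$ may be unbounded; $A+zB$ is defined on the domain of $A$. *)

(* Defs.v *)
From HB Require Import structures.
From mathcomp Require Import all_boot all_order all_algebra.
From mathcomp Require Import complex.
From mathcomp Require Import reals.
Set Implicit Arguments. Unset Strict Implicit. Unset Printing Implicit Defensive.
Import Order.TTheory GRing.Theory Num.Theory.
Local Open Scope ring_scope.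
Local Open Scope complex_scope.

Definition is_inner_product (R : realType) (V : lmodType R[i]) (ip : V -> V -> R[i]) : Prop :=
  [/\ (forall (a : R[i]) (x y z : V), ip (a *: x + y) z = a * ip x z + ip y z),
      (forall x y : V, ip y x = (ip x y)^*),
      (forall x : V, 0 <= ip x x) &
      (forall x : V, ip x x = 0 -> x = 0)].

Definition hnorm (R : realType) (V : lmodType R[i]) (ip : V -> V -> R[i]) (x : V) : R :=
  Num.sqrt (@complex.Re R (ip x x)).

Definition is_hilbert (R : realType) (V : lmodType R[i]) (ip : V -> V -> R[i]) : Prop :=
  is_inner_product ip /\
  forall u : nat -> V,
    (forall e : R, 0 < e -> exists N : nat, forall m n : nat, (N <= m)%N -> (N <= n)%N ->
        hnorm ip (u m - u n) < e) ->
    exists l : V, forall e : R, 0 < e -> exists N : nat, forall n : nat, (N <= n)%N ->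
        hnorm ip (u n - l) < e.

(* An (unbounded) linear operator A with domain D: D is a linear subspace,
   A is linear on D (values of A outside D are irrelevant). *)
Definition is_lin_op (R : realType) (V : lmodType R[i]) (D : V -> Prop) (A : V -> V) : Prop :=
  D 0 /\
  forall (a : R[i]) (x y : V), D x -> D y ->
    D (a *: x + y) /\ A (a *: x + y) = a *: A x + A y.

(* Self-adjoint operator (A, D): densely defined, and A equals its adjoint, i.e.
   A is symmetric on D and the adjoint domain is contained in D. *)
Definition self_adjoint (R : realType) (V : lmodType R[i]) (ip : V -> V -> R[i])
    (D : V -> Prop) (A : V -> V) : Prop :=
  [/\ is_lin_op D A,
      (forall (x : V) (e : R), 0 < e -> exists d : V, D d /\ hnorm ip (x - d) < e),
      (forall x y : V, D x -> D y -> ip (A x) y = ip x (A y)) &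
      (forall y : V, (exists z : V, forall x : V, D x -> ip (A x) y = ip x z) -> D y)].

Definition bounded_op (R : realType) (V : lmodType R[i]) (ip : V -> V -> R[i]) (B : V -> V) : Prop :=
  (forall (a : R[i]) (x y : V), B (a *: x + y) = a *: B x + B y) /\
  exists M : R, forall x : V, hnorm ip (B x) <= M * hnorm ip x.

Definition nonneg_op (R : realType) (V : lmodType R[i]) (ip : V -> V -> R[i]) (B : V -> V) : Prop :=
  forall x : V, 0 <= ip (B x) x.

Definition bounded_inverse (R : realType) (V : lmodType R[i]) (ip : V -> V -> R[i])
    (D : V -> Prop) (T : V -> V) (S : V -> V) : Prop :=
  [/\ (forall y : V, D (S y) /\ T (S y) = y),
      (forall x : V, D x -> S (T x) = x) &
      exists M : R, forall y : V, hnorm ip (S y) <= M * hnorm ip y].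

Definition zero_in_resolvent (R : realType) (V : lmodType R[i]) (ip : V -> V -> R[i])
    (D : V -> Prop) (T : V -> V) : Prop :=
  exists S : V -> V, bounded_inverse ip D T S.

(* Main.v *)
Require Import Defs.
From HB Require Import structures.
From mathcomp Require Import all_boot all_order all_algebra.
From mathcomp Require Import complex.
From mathcomp Require Import classical_sets reals.
From mathcomp Require Import ring lra.
Import Order.TTheory GRing.Theory Num.Theory.
Local Open Scope ring_scope.
Local Open Scope complex_scope.

Lemma disc (R : realFieldType) (a b c : R) : 0 <= c ->
  (forall s, 0 <= a + 2*s*b + s^+2*c) -> b^+2 <= a*c.
Proof.
move=> c0 H.
have [cz|cp] := eqVneq c 0.
  subst c. have [bz|bn] := eqVneq b 0; first by subst b; rewrite expr2 !mulr0.
  have := H (-(a+1)/(2*b)). rewrite mulr0 addr0.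
  have -> : 2 * (- (a + 1) / (2 * b)) * b = -(a+1) by field; rewrite bn.
  lra.
have cg : 0 < c by rewrite lt_def cp c0.
have := H (-b/c).
have -> : a + 2 * (- b / c) * b + (- b / c) ^+ 2 * c = a - b^+2/c.
  by field.
move=> h. have : b^+2 / c <= a by lra.
by rewrite ler_pdivrMr // mulrC.
Qed.

Lemma sq_le (R : realFieldType) (p q : R) : 0 <= p -> p <= q -> p^+2 <= q^+2.
Proof. move=> *; nra. Qed.

Section Forms.
Variables (R : realType) (V : lmodType R[i]).

Lemma CS (g : V -> V -> R) :
  (forall x y z, g (x+y) z = g x z + g y z) ->
  (forall s x z, g (s%:C *: x) z = s * g x z) ->
  (forall x y, g x y = g y x) -> (forall x, 0 <= g x x) ->
  forall x y, (g x y)^+2 <= g x x * g y y.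
Proof.
move=> gD gZ gC g0 x y.
have gDr : forall x y z, g z (x+y) = g z x + g z y.
  by move=> u v z; rewrite gC gD ![g _ z]gC.
have gZr : forall s x z, g z (s%:C *: x) = s * g z x.
  by move=> s u z; rewrite gC gZ gC.
apply: disc; first exact: g0.
move=> s; have := g0 (x + s%:C *: y).
rewrite gD gDr gDr gZ gZ gZr gZr (gC y x). 
suff -> : g x x + s * g x y + (s * g x y + s * (s * g y y)) = g x x + 2 * s * g x y + s ^+ 2 * g y y by [].
ring.
Qed.

Variable ip : V -> V -> R[i].
Hypothesis Hip : is_inner_product ip.

Definition g0 x y := complex.Re (ip x y).
Definition nsq x := g0 x x.

Lemma ipDZ a x y z : ip (a *: x + y) z = a * ip x z + ip y z.
Proof. by case: Hip. Qed.
Lemma ip0l z : ip 0 z = 0.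
Proof.
have := ipDZ 1 0 0 z; rewrite scale1r addr0 mul1r.
by move/(congr1 (fun w => w - ip 0 z)); rewrite addrK subrr => /esym.
Qed.
Lemma ipDl x y z : ip (x + y) z = ip x z + ip y z.
Proof. by have := ipDZ 1 x y z; rewrite scale1r mul1r. Qed.
Lemma ipZl a x z : ip (a *: x) z = a * ip x z.
Proof. by have := ipDZ a x 0 z; rewrite addr0 ip0l addr0. Qed.
Lemma ipC x y : ip y x = (ip x y)^*.
Proof. by case: Hip. Qed.
Lemma ipxx_ge0 x : 0 <= ip x x.
Proof. by case: Hip. Qed.

Lemma g0Dl x y z : g0 (x + y) z = g0 x z + g0 y z.
Proof. by rewrite /g0 ipDl; case: (ip x z) => a b; case: (ip y z). Qed.
Lemma g0Zl s x z : g0 (s%:C *: x) z = s * g0 x z.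
Proof. by rewrite /g0 ipZl; case: (ip x z) => a b /=; simpc. Qed.
Lemma g0C x y : g0 x y = g0 y x.
Proof. by rewrite /g0 (ipC x y); case: (ip x y). Qed.
Lemma g0Dr x y z : g0 z (x + y) = g0 z x + g0 z y.
Proof. by rewrite g0C g0Dl ![g0 _ z]g0C. Qed.
Lemma g0Zr s x z : g0 z (s%:C *: x) = s * g0 z x.
Proof. by rewrite g0C g0Zl g0C. Qed.
Lemma g00l z : g0 0 z = 0.
Proof. by rewrite /g0 ip0l. Qed.
Lemma g00r z : g0 z 0 = 0.
Proof. by rewrite g0C g00l. Qed.
Lemma g0Nl x z : g0 (- x) z = - g0 x z.
Proof.
have := g0Dl x (-x) z; rewrite subrr g00l. lra.
Qed.
Lemma g0Nr x z : g0 z (- x) = - g0 z x.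
Proof. by rewrite g0C g0Nl g0C. Qed.

Lemma nsq_ge0 x : 0 <= nsq x.
Proof. by have := ipxx_ge0 x; rewrite lecE => /andP[]. Qed.
Lemma ipxxE x : ip x x = (nsq x)%:C.
Proof.
have := ipxx_ge0 x; rewrite lecE /nsq /g0 => /andP[/eqP h _].
by case: (ip x x) h => a b /= ->.
Qed.
Lemma nsq_eq0 x : nsq x = 0 -> x = 0.
Proof. by move=> h; case: Hip => _ _ _; apply; rewrite ipxxE h. Qed.
Lemma hnormE x : hnorm ip x = Num.sqrt (nsq x).
Proof. by []. Qed.

Lemma CSip x y : (g0 x y)^+2 <= nsq x * nsq y.
Proof. apply: CS => //; [exact: g0Dl|exact: g0Zl|exact: g0C|exact: nsq_ge0]. Qed.

Lemma nsqZ s x : nsq (s%:C *: x) = s^+2 * nsq x.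
Proof. by rewrite /nsq g0Zl g0Zr mulrA expr2. Qed.

Lemma nsqD x y : nsq (x + y) <= 2 * nsq x + 2 * nsq y.
Proof.
have := nsq_ge0 (x - y).
rewrite /nsq !g0Dl !g0Dr !g0Nl !g0Nr (g0C y x). lra.
Qed.

Lemma nsqi x : nsq ('i *: x) = nsq x.
Proof.
rewrite /nsq /g0 ipZl (ipC) ipZl ipxxE; simpc; by [].
Qed.


Variables (D : V -> Prop) (A B : V -> V).
Hypothesis HA : is_lin_op D A.
Hypothesis HAs : forall x y, D x -> D y -> ip (A x) y = ip x (A y).
Hypothesis HBl : forall (a : R[i]) x y, B (a *: x + y) = a *: B x + B y.
Hypothesis HBs : forall x y, ip (B x) y = ip x (B y).

Lemma D0 : D 0. Proof. by case: HA. Qed.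
Lemma A0 : A 0 = 0.
Proof.
case: HA => d0 h; have [_ e] := h 1 0 0 d0 d0; move: e; rewrite !scale1r addr0.
by move/(congr1 (fun w => w - A 0)); rewrite addrK subrr => /esym.
Qed.
Lemma ADZ a x y : D x -> D y -> D (a *: x + y) /\ A (a *: x + y) = a *: A x + A y.
Proof. by case: HA => _ h; apply: h. Qed.
Lemma AD x y : D x -> D y -> D (x + y) /\ A (x + y) = A x + A y.
Proof. by move=> dx dy; have := ADZ 1 _ _ dx dy; rewrite !scale1r. Qed.
Lemma AZ a x : D x -> D (a *: x) /\ A (a *: x) = a *: A x.
Proof. by move=> dx; have := ADZ a _ _ dx D0; rewrite !addr0 A0 addr0. Qed.
Lemma AN x : D x -> D (- x) /\ A (- x) = - A x.
Proof. by move=> dx; have := AZ (-1) _ dx; rewrite !scaleN1r. Qed.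

Lemma B0 : B 0 = 0.
Proof.
have := HBl 1 0 0; rewrite !scale1r addr0.
by move/(congr1 (fun w => w - B 0)); rewrite addrK subrr => /esym.
Qed.
Lemma BD x y : B (x + y) = B x + B y.
Proof. by have := HBl 1 x y; rewrite !scale1r. Qed.
Lemma BZ a x : B (a *: x) = a *: B x.
Proof. by have := HBl a x 0; rewrite !addr0 B0 addr0. Qed.
Lemma BN x : B (- x) = - B x.
Proof. by rewrite -scaleN1r BZ scaleN1r. Qed.

Section Inv.
Variable S : V -> V.
Hypothesis HS : bounded_inverse ip D A S.

Lemma SD y : D (S y). Proof. by case: HS => h _ _; case: (h y). Qed.
Lemma AS y : A (S y) = y. Proof. by case: HS => h _ _; case: (h y). Qed.
Lemma SA x : D x -> S (A x) = x. Proof. by case: HS => _ h _; apply: h. Qed.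
Lemma SDZ a x y : S (a *: x + y) = a *: S x + S y.
Proof.
have [d e] := ADZ a _ _ (SD x) (SD y).
by rewrite -[in LHS](AS x) -[in LHS](AS y) -e SA.
Qed.
Lemma SD' x y : S (x + y) = S x + S y.
Proof. by have := SDZ 1 x y; rewrite !scale1r. Qed.
Lemma S0 : S 0 = 0. Proof. by have := SA 0 D0; rewrite A0. Qed.
Lemma SZ a x : S (a *: x) = a *: S x.
Proof. by have := SDZ a x 0; rewrite !addr0 S0 addr0. Qed.
Lemma SN x : S (- x) = - S x.
Proof. by rewrite -scaleN1r SZ scaleN1r. Qed.
Lemma Ssym u w : ip (S u) w = ip u (S w).
Proof. by have := HAs _ _ (SD u) (SD w); rewrite !AS => ->. Qed.

End Inv.
Arguments SD {S}. Arguments AS {S}. Arguments SA {S}. Arguments SDZ {S}. Arguments SD' {S}.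
Arguments S0 {S}. Arguments SZ {S}. Arguments SN {S}. Arguments Ssym {S}.

Lemma nsq_bound (f : V -> V) M :
  (forall x, hnorm ip (f x) <= M * hnorm ip x) -> forall x, nsq (f x) <= M^+2 * nsq x.
Proof.
move=> h x; have := h x; rewrite !hnormE => /(@sq_le _ _ _ (sqrtr_ge0 _)).
by rewrite exprMn !sqr_sqrtr // nsq_ge0.
Qed.

Lemma hnorm_bound (f : V -> V) C : 0 <= C ->
  (forall x, nsq (f x) <= C * nsq x) -> exists M, forall x, hnorm ip (f x) <= M * hnorm ip x.
Proof.
move=> C0 h; exists (Num.sqrt C) => x; rewrite !hnormE -sqrtrM //.
by rewrite ler_sqrt ?h // mulr_ge0 // nsq_ge0.
Qed.

Lemma nsqZc c w : nsq (c *: w) <= (2*(complex.Re c)^+2 + 2*(complex.Im c)^+2) * nsq w.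
Proof.
have -> : c *: w = (complex.Re c)%:C *: w + (complex.Im c)%:C *: ('i *: w).
  by rewrite scalerA mulrC -scalerDl -complexE.
apply: (le_trans (nsqD _ _)); rewrite !nsqZ nsqi; lra.
Qed.

Variable MB : R.
Hypothesis HBb : forall x, hnorm ip (B x) <= MB * hnorm ip x.

Lemma part2 Ainv (HAi : bounded_inverse ip D A Ainv) (HBAB : forall x, B (Ainv (B x)) = 0) z :
  bounded_inverse ip D (fun x => A x + z *: B x) (fun y => Ainv y - z *: Ainv (B (Ainv y))).
Proof.
split.
- move=> y.
  have du := SD HAi y; have dw := SD HAi (B (Ainv y)).
  have [dS eS] := ADZ (-z) _ _ dw du.
  have E : Ainv y - z *: Ainv (B (Ainv y)) = (-z) *: Ainv (B (Ainv y)) + Ainv y.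
    by rewrite scaleNr addrC.
  rewrite E; split => //.
  rewrite eS !(AS HAi) HBl HBAB scaler0 add0r scaleNr.
  by rewrite addrC addNKr.
- move=> x dx.
  rewrite (SD' HAi) (SZ HAi) (SA HAi) // BD BZ HBAB scaler0 addr0.
  by rewrite addrK.
- case: HAi => _ _ [MA hA].
  have nA := nsq_bound _ _ hA; have nB := nsq_bound _ _ HBb.
  set k := 2 * complex.Re (-z) ^+ 2 + 2 * complex.Im (-z) ^+ 2.
  have k0 : 0 <= k by rewrite /k addr_ge0 // mulr_ge0 // sqr_ge0.
  apply: (@hnorm_bound _ (2 * MA^+2 + 2 * k * (MA^+2 * (MB^+2 * MA^+2)))).
    have p := mulr_ge0 (sqr_ge0 MA) (mulr_ge0 (sqr_ge0 MB) (sqr_ge0 MA)).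
    exact: (addr_ge0 (mulr_ge0 _ (sqr_ge0 _)) (mulr_ge0 (mulr_ge0 _ k0) p)).
  move=> y.
  have h1 := nA y.
  have h4 : nsq (Ainv (B (Ainv y))) <= MA^+2 * (MB^+2 * (MA^+2 * nsq y)).
    apply: (le_trans (nA _)); rewrite ler_wpM2l ?sqr_ge0 //.
    apply: (le_trans (nB _)); rewrite ler_wpM2l ?sqr_ge0 //.
  have h5 := nsqZc (-z) (Ainv (B (Ainv y))).
  have h6 : k * nsq (Ainv (B (Ainv y))) <= k * (MA^+2 * (MB^+2 * (MA^+2 * nsq y))).
    by rewrite ler_wpM2l.
  have h7 := nsqD (Ainv y) ((-z) *: Ainv (B (Ainv y))).
  rewrite -scaleNr.
  apply: (le_trans h7). rewrite -/k in h5. nra.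
Qed.



Lemma sq_le_sq (u w : R) : 0 <= w -> u^+2 <= w^+2 -> u <= w.
Proof. move=> *; nra. Qed.
Lemma p_le (p c : R) : 0 <= p -> 0 <= c -> p^+2 <= c * p -> p <= c.
Proof. move=> *; nra. Qed.

Hypothesis MB0 : 0 <= MB.
Hypothesis HBp : forall x, 0 <= ip (B x) x.

Definition bq x := g0 (B x) x.

Lemma bq_ge0 x : 0 <= bq x.
Proof. by have := HBp x; rewrite lecE => /andP[]. Qed.

Lemma g0B u v : g0 (B u) v = g0 u (B v).
Proof. by rewrite /g0 HBs. Qed.

Lemma nB x : nsq (B x) <= MB^+2 * nsq x.
Proof. exact: (nsq_bound _ _ HBb). Qed.

Lemma nsqB_bq x : nsq (B x) <= MB * bq x.
Proof.
have cs := CS (fun u v => g0 (B u) v).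
have gD : forall u v w, g0 (B (u+v)) w = g0 (B u) w + g0 (B v) w.
  by move=> u v w; rewrite BD g0Dl.
have gZ : forall s u w, g0 (B (s%:C *: u)) w = s * g0 (B u) w.
  by move=> s u w; rewrite BZ g0Zl.
have gC : forall u v, g0 (B u) v = g0 (B v) u.
  by move=> u v; rewrite g0B g0C.
have := cs gD gZ gC bq_ge0 x (B x).
rewrite -/(bq x) -/(nsq (B x)).
have h2 : g0 (B (B x)) (B x) <= MB * nsq (B x).
  apply: sq_le_sq; first by rewrite mulr_ge0 // nsq_ge0.
  apply: (le_trans (CSip _ _)); rewrite exprMn expr2 mulrA.
  by rewrite ler_wpM2r ?nsq_ge0 // nB.
move=> h.
apply: p_le; first exact: nsq_ge0.
  by rewrite mulr_ge0 // bq_ge0.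
apply: (le_trans h); rewrite (mulrC MB) -mulrA.
by rewrite ler_wpM2l ?bq_ge0.
Qed.

Lemma bq_nsq x : bq x <= MB * nsq x.
Proof.
apply: sq_le_sq; first by rewrite mulr_ge0 // nsq_ge0.
apply: (le_trans (CSip _ _)); rewrite exprMn expr2 mulrA.
by rewrite ler_wpM2r ?nsq_ge0 // nB.
Qed.

Lemma fin_contra (M b s e K f : R) : 0 < M -> 0 < b -> 0 <= K -> 0 < e -> e <= M/2 ->
  K*e < M^+4/4 -> (M - e)*b < s -> M^+2 * s^+2 <= K * f * b -> f <= e * b -> False.
Proof.
move=> M0 b0 K0 e0 eM Ke hs hK hf.
have s1 : M/2*b < s.
  have h' : M/2 <= M - e by lra.
  exact: le_lt_trans (ler_wpM2r (ltW b0) h') hs.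
have s0 : 0 <= M/2*b by rewrite mulr_ge0 ?ltW // divr_gt0.
have s2 : (M/2*b)^+2 < s^+2 by rewrite !expr2; apply: ltr_pM.
have s3 : K * f * b <= K * e * b^+2.
  by have := ler_wpM2r (ltW b0) (ler_wpM2l K0 hf); rewrite expr2 !mulrA.
have s4 : K * e * b^+2 < M^+4/4 * b^+2 by rewrite ltr_pM2r // exprn_gt0.
have s5 : M^+4/4 * b^+2 = M^+2 * (M/2*b)^+2.
  by rewrite !exprMn; field.
have s6 : M^+2 * (M/2*b)^+2 < M^+2 * s^+2 by rewrite ltr_pM2l // exprn_gt0.
lra.
Qed.

Lemma bound_abs (f : V -> V) M : (forall x, hnorm ip (f x) <= M * hnorm ip x) ->
  forall x, hnorm ip (f x) <= `|M| * hnorm ip x.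
Proof.
move=> h x; apply: (le_trans (h x)); rewrite ler_wpM2r // ?ler_norm //.
by rewrite hnormE sqrtr_ge0.
Qed.

Section Key.
Variable S0 : V -> V.
Hypothesis HS0 : bounded_inverse ip D A S0.
Variable MA : R.
Hypothesis MA0 : 0 <= MA.
Hypothesis HS0b : forall y, hnorm ip (S0 y) <= MA * hnorm ip y.

Definition hq x := g0 (S0 (B x)) (B x).

Lemma g0S u v : g0 (S0 u) v = g0 u (S0 v).
Proof. by rewrite /g0 (Ssym HS0). Qed.

Lemma hq_sq x : hq x ^+ 2 <= (MA * MB * bq x)^+2.
Proof.
apply: (le_trans (CSip _ _)).
have h1 : nsq (S0 (B x)) * nsq (B x) <= (MA * nsq (B x))^+2.
  rewrite exprMn expr2 mulrA ler_wpM2r ?nsq_ge0 //.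
  exact: (nsq_bound _ _ HS0b).
apply: (le_trans h1); apply: sq_le; first by rewrite mulr_ge0 ?nsq_ge0.
by rewrite -mulrA ler_wpM2l // nsqB_bq.
Qed.

Definition G (M s : R) x := M%:C *: B x - s%:C *: B (S0 (B x)).

Lemma GD M s u v : G M s (u + v) = G M s u + G M s v.
Proof. by rewrite /G !BD (SD' HS0) BD !scalerDr opprD addrACA. Qed.

Lemma GZ M s a u : G M s (a%:C *: u) = a%:C *: G M s u.
Proof.
by rewrite /G !BZ (SZ HS0) BZ !scalerA scalerBr !scalerA (mulrC a%:C) (mulrC a%:C).
Qed.

Lemma GE M s u v : g0 (G M s u) v = M * g0 (B u) v - s * g0 (S0 (B u)) (B v).
Proof. by rewrite /G g0Dl g0Nl !g0Zl (g0B (S0 (B u))). Qed.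

Lemma GC M s u v : g0 (G M s u) v = g0 (G M s v) u.
Proof.
rewrite !GE; congr (_ * _ - _ * _); first by rewrite g0B g0C.
by rewrite g0S g0C.
Qed.

Lemma GF M s u : g0 (G M s u) u = M * bq u - s * hq u.
Proof. by rewrite GE. Qed.



Lemma St_G M s St : M != 0 ->
  bounded_inverse ip D (fun x => A x + (- s / M)%:C *: B x) St ->
  forall x, St (G M s x) = M%:C *: S0 (B x).
Proof.
move=> M0 [_ h _] x.
have [dw Aw] := AZ M%:C _ (SD HS0 (B x)).
rewrite -[RHS](h _ dw) Aw (AS HS0) BZ scalerA -rmorphM.
by rewrite divfK // rmorphN scaleNr.
Qed.

Hypothesis Hres : forall t : R, zero_in_resolvent ip D (fun x => A x + t%:C *: B x).

Lemma key (sg : R) x0 : sg * hq x0 <= 0.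
Proof.
rewrite leNgt; apply/negP => pos.
set c := `|sg| * (MA * MB).
have c0 : 0 <= c by rewrite /c mulr_ge0 ?mulr_ge0.
have hb : forall y, sg * hq y <= c * bq y /\ - (sg * hq y) <= c * bq y.
  move=> y.
  have h' : (sg * hq y)^+2 <= (c * bq y)^+2.
    rewrite /c -mulrA [(sg * _)^+2]exprMn [(`|sg| * _)^+2]exprMn real_normK ?num_real //.
    by apply: ler_wpM2l; [exact: sqr_ge0 | exact: hq_sq].
  have cb : 0 <= c * bq y by rewrite mulr_ge0 ?bq_ge0.
  by split; apply: sq_le_sq => //; rewrite sqrrN.
have b0 : 0 < bq x0.
  rewrite lt_def bq_ge0 andbT; apply/eqP => e.
  by have := (hb x0).1; rewrite e mulr0; lra.
pose E : set R := fun r => exists y, 0 < bq y /\ r = sg * hq y / bq y.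
have hE : has_sup E.
  split; first by exists (sg * hq x0 / bq x0); exists x0.
  exists c => r [y [bpos ->]]; rewrite ler_pdivrMr //; exact: (hb y).1.
set M := sup E.
have Mub : forall y, sg * hq y <= M * bq y.
  move=> y; have [bpos|bl] := ltP 0 (bq y).
    have ub : forall z, E z -> z <= M := sup_upper_bound hE.
    have := ub (sg * hq y / bq y) (ex_intro _ y (conj bpos erefl)).
    by rewrite ler_pdivrMr.
  have bz : bq y = 0 by apply/eqP; rewrite eq_le bl bq_ge0.
  by have := (hb y).1; rewrite bz !mulr0.
have Mpos : 0 < M.
  have h := Mub x0; rewrite ltNge; apply/negP => Ml.
  have : M * bq x0 <= 0 by rewrite mulr_le0_ge0 // ltW.
  lra.
have M0 : M != 0 by rewrite gt_eqF.
have [St HSt] := Hres (- sg / M).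
have HStG := St_G _ _ _ M0 HSt.
case: HSt => _ _ [N hN].
have nSt := nsq_bound _ _ hN.
set K1 := (M + c) * MB.
have K10 : 0 <= K1 by rewrite mulr_ge0 // addr_ge0 // ltW.
have FF : forall y, g0 (G M sg y) y <= K1 * nsq y.
  move=> y; rewrite GF.
  have h1 : M * bq y - sg * hq y <= (M + c) * bq y by rewrite mulrDl; have := (hb y).2; lra.
  apply: (le_trans h1); rewrite /K1 -mulrA; apply: ler_wpM2l; [by rewrite addr_ge0 // ltW | exact: bq_nsq].
have Fp : forall u, 0 <= g0 (G M sg u) u by move=> u; rewrite GF subr_ge0 Mub.
have nG : forall y, nsq (G M sg y) <= K1 * g0 (G M sg y) y.
  move=> y.
  have cs := CS (fun u v => g0 (G M sg u) v).
  have gD : forall u v w, g0 (G M sg (u+v)) w = g0 (G M sg u) w + g0 (G M sg v) w.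
    by move=> u v w; rewrite GD g0Dl.
  have gZ : forall s u w, g0 (G M sg (s%:C *: u)) w = s * g0 (G M sg u) w.
    by move=> s u w; rewrite GZ g0Zl.
  have := cs gD gZ (GC M sg) Fp y (G M sg y).
  change (g0 (G M sg y) (G M sg y)) with (nsq (G M sg y)) => h.
  apply: p_le; [exact: nsq_ge0 | by rewrite mulr_ge0 |].
  apply: (le_trans h); rewrite (mulrC K1) -mulrA.
  by apply: ler_wpM2l; [exact: Fp | exact: FF].
set K := sg^+2 * N^+2 * K1 * MB.
have K0 : 0 <= K.
  by apply: mulr_ge0 => //; apply: mulr_ge0 => //; apply: mulr_ge0; apply: sqr_ge0.
have main : forall y, M^+2 * (sg * hq y)^+2 <= K * g0 (G M sg y) y * bq y.
  move=> y.
  have ha : hq y ^+2 <= nsq (S0 (B y)) * nsq (B y) := CSip _ _.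
  have hw : M^+2 * nsq (S0 (B y)) <= N^+2 * nsq (G M sg y).
    by have := nSt (G M sg y); rewrite HStG nsqZ.
  have hg := nG y.
  have hn := nsqB_bq y.
  have e1 : M^+2 * (sg * hq y)^+2 = sg^+2 * (M^+2 * hq y^+2) by ring.
  have t1 : M^+2 * hq y^+2 <= (M^+2 * nsq (S0 (B y))) * nsq (B y).
    by rewrite -mulrA; apply: ler_wpM2l; [exact: sqr_ge0 | exact: ha].
  have t2 : (M^+2 * nsq (S0 (B y))) * nsq (B y) <=
            (N^+2 * (K1 * g0 (G M sg y) y)) * (MB * bq y).
    apply: ler_pM; [by rewrite mulr_ge0 ?sqr_ge0 ?nsq_ge0 | exact: nsq_ge0 | | exact: hn].
    by apply: (le_trans hw); apply: ler_wpM2l; [exact: sqr_ge0 | exact: hg].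
  have -> : K * g0 (G M sg y) y * bq y =
      sg^+2 * ((N^+2 * (K1 * g0 (G M sg y) y)) * (MB * bq y)) by rewrite /K; ring.
  rewrite e1; apply: ler_wpM2l; first exact: sqr_ge0.
  exact: le_trans t1 t2.
set d := 4 * K + 4 + 2 * M^+3.
have M3 : 0 < M^+3 by rewrite exprn_gt0.
have M4 : 0 < M^+4 by rewrite exprn_gt0.
have d0 : 0 < d by rewrite /d; lra.
set eps := M^+4 / d.
have e0 : 0 < eps by rewrite divr_gt0.
have KM : 0 <= K * M by rewrite mulr_ge0 // ltW.
have eM : eps <= M / 2.
  rewrite ler_pdivrMr //.
  have -> : M / 2 * d = M^+4 + 2 * (K * M) + 2 * M by rewrite /d; field.
  lra.
have KM4 : 0 <= M^+4 * M^+3 by rewrite mulr_ge0 // ltW.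
have Ke : K * eps < M^+4/4.
  rewrite mulrA ltr_pdivrMr //.
  have -> : M^+4 / 4 * d = K * M^+4 + M^+4 + M^+4 * M^+3 / 2 by rewrite /d; field.
  lra.
have [r Er hr] := sup_adherent e0 hE.
case: Er => y [bpos re]; subst r.
rewrite -/M ltr_pdivlMr // in hr.
have hf : g0 (G M sg y) y <= eps * bq y.
  by rewrite GF; rewrite mulrBl in hr; lra.
exact: (@fin_contra _ _ _ _ _ _ Mpos bpos K0 e0 eM Ke hr (main y) hf).
Qed.

Lemma BSB x : B (S0 (B x)) = 0.
Proof.
have h0 : forall y, hq y = 0.
  by move=> y; have := key 1 y; have := key (-1) y; rewrite mul1r mulN1r; lra.
have qD : forall u v w, g0 (S0 (B (u + v))) (B w) = g0 (S0 (B u)) (B w) + g0 (S0 (B v)) (B w).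
  by move=> u v w; rewrite BD (SD' HS0) g0Dl.
have qC : forall u v, g0 (S0 (B u)) (B v) = g0 (S0 (B v)) (B u).
  by move=> u v; rewrite g0S g0C.
have q0 : forall u v, g0 (S0 (B u)) (B v) = 0.
  move=> u v; have := h0 (u + v); rewrite /hq qD !BD !g0Dr.
  rewrite -!/(hq _) !h0 (qC v u). lra.
apply: nsq_eq0; rewrite /nsq g0B.
by have := q0 x (B (S0 (B x))).
Qed.
End Key.
End Forms.

Theorem proposition2p1 (R : realType) (V : lmodType R[i]) (ip : V -> V -> R[i])
    (D : V -> Prop) (A B : V -> V) :
  is_hilbert ip ->
  self_adjoint ip D A ->
  self_adjoint ip (fun _ => True) B ->
  bounded_op ip B ->
  nonneg_op ip B ->
  ((forall t : R, zero_in_resolvent ip D (fun x => A x + t%:C *: B x)) <->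
   (zero_in_resolvent ip D A /\
    forall Ainv : V -> V, bounded_inverse ip D A Ainv -> forall x : V, B (Ainv (B x)) = 0))
  /\
  (forall Ainv : V -> V, bounded_inverse ip D A Ainv ->
    (forall x : V, B (Ainv (B x)) = 0) ->
    forall z : R[i],
      bounded_inverse ip D (fun x => A x + z *: B x)
        (fun y => Ainv y - z *: Ainv (B (Ainv y)))).
Proof.
move=> [Hip _] [HAl _ HAs _] [_ _ HBs' _] [HBl [MB hMB]] HBp.
have HBs : forall x y, ip (B x) y = ip x (B y) by move=> x y; exact: HBs'.
have HBb := @bound_abs _ _ ip B MB hMB.
have MB0 : 0 <= `|MB| := normr_ge0 _.
have P2 := @part2 _ _ _ Hip _ _ _ HAl HBl _ HBb.
split; last exact: P2.
split.
- move=> Hres; split.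
    have [S [h1 h2 h3]] := Hres 0; exists S; split => //.
      by move=> y; have [d e] := h1 y; split => //; rewrite rmorph0 scale0r addr0 in e.
    by move=> x dx; have := h2 x dx; rewrite rmorph0 scale0r addr0.
  move=> Ainv HAi x; have [_ _ [MA hMA]] := HAi.
  exact: (@BSB _ _ _ Hip _ _ _ HAl HAs HBl HBs _ HBb MB0 HBp _ HAi _ (normr_ge0 MA) (@bound_abs _ _ ip Ainv MA hMA) Hres x).
- move=> [[Ainv HAi] HBAB] t.
  by exists (fun y => Ainv y - t%:C *: Ainv (B (Ainv y))); apply: P2 => //; apply: HBAB.
Qed.
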